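(* Let $k \geq 1$ be an integer and let $G=(V,E)$ be a $k$-connected graph with $n \geq 9$ vertices, $e$ edges, minimum degree $\delta$ and maximum degree $\Delta$. If any one of the following five conditions holds, then $G$ is traceable: [1] $$Z_1(G) \geq (n - k - 2)\Delta^2 + \frac{e^2}{2(k + 2)} + \frac{(k + 2) \Delta^3}{2 \delta};$$ [2] $$F(G) \leq (n - k - 2) \delta^3 + \frac{\delta (2 (k + 2)^2 \delta^2 - e^2)}{k + 2};$$ [3] $$F(G) \leq (n - k - 2) \delta^3 + \frac{\delta}{k + 2} \left( 2 (k + 2) \left((k + 2) \delta^2 + \frac{e^2}{n - k - 2}\right) - e^2 - 2 (k + 2) (n - k - 2) \Delta^2\right);$$ [4] $$Inv(G) \leq \frac{n - k - 2}{\Delta} + \frac{2 (k + 2)^2 \delta^2 - e^2}{(k + 2) \Delta^3};$$ [5] $$Inv(G) \leq \frac{n - k - 2}{\Delta} + \frac{1}{(k + 2) \Delta^3} \left( 2 (k + 2) \left((k + 2) \delta^2 + \frac{e^2}{n - k - 2}\right) - e^2 - 2 (k + 2) (n - k - 2) \Delta^2\right).$$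
   Context: Graphs are finite, undirected, without loops or multiple edges. $d(u)$ denotes the degree of vertex $u$; $\delta$ and $\Delta$ are the minimum and maximum degrees. The first Zagreb index is $Z_1(G)=\sum_{u\in V} d(u)^2$, the forgotten topological index is $F(G)=\sum_{u\in V} d(u)^3$, and the inverse degree is $Inv(G)=\sum_{u\in V}\frac{1}{d(u)}$. A graph is traceable if it has a path containing all its vertices. *)

(* Defs.v *)
From mathcomp Require Import all_boot all_order all_algebra.
Set Implicit Arguments. Unset Strict Implicit. Unset Printing Implicit Defensive.
Import Order.TTheory GRing.Theory Num.Theory.

Definition simple_graph (T : finType) (g : rel T) : Prop :=
  symmetric g /\ irreflexive g.

Definition deg (T : finType) (g : rel T) (u : T) : nat := #|[set v | g u v]|.

Definition num_edges (T : finType) (g : rel T) : nat :=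
  #|[set A : {set T} | [exists x, [exists y, g x y && (A == [set x; y])]]]|.

(* minimum and maximum degree (for nonempty T; min uses #|T| as neutral,
   which exceeds every degree of a simple graph) *)
Definition min_deg (T : finType) (g : rel T) : nat :=
  \big[minn/#|T|]_(u : T) deg g u.
Definition max_deg (T : finType) (g : rel T) : nat :=
  \max_(u : T) deg g u.

Definition del_rel (T : finType) (g : rel T) (S : {set T}) : rel T :=
  [rel x y | g x y && (x \notin S) && (y \notin S)].

Definition k_connected (T : finType) (g : rel T) (k : nat) : Prop :=
  k < #|T| /\
  forall S : {set T}, #|S| < k ->
    forall x y, x \notin S -> y \notin S -> connect (del_rel g S) x y.

Definition traceable (T : finType) (g : rel T) : Prop :=
  exists (x : T) (p : seq T),
    [/\ uniq (x :: p), (forall v : T, v \in x :: p) & path g x p].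

Local Open Scope ring_scope.

Definition zagreb1 (R : numDomainType) (T : finType) (g : rel T) : R :=
  \sum_(u : T) ((deg g u)%:R ^+ 2).
Definition forgotten (R : numDomainType) (T : finType) (g : rel T) : R :=
  \sum_(u : T) ((deg g u)%:R ^+ 3).
Definition inv_deg (R : numFieldType) (T : finType) (g : rel T) : R :=
  \sum_(u : T) ((deg g u)%:R)^-1.

(* Main.v *)
Require Import Defs.
From mathcomp Require Import all_boot all_order.
From mathcomp Require Import zify.
Set Implicit Arguments. Unset Strict Implicit. Unset Printing Implicit Defensive.

Ltac clear_all := repeat match goal with H : _ |- _ => clear H end.

Definition jn (T : Type) (g : rel T) (x0 : T) (l1 l2 : seq T) :=
  [|| nilp l1, nilp l2 | g (last x0 l1) (head x0 l2)].

Lemma sorted_catE (T : Type) (g : rel T) (x0 : T) (l1 l2 : seq T) :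
  sorted g (l1 ++ l2) = [&& sorted g l1, sorted g l2 & jn g x0 l1 l2].
Proof.
case: l1 => [|a l1]; case: l2 => [|b l2] //=; rewrite /jn /= ?cats0 ?andbT //.
by rewrite cat_path /=; case: (path g a l1); case: (g _ _); case: (path g b l2).
Qed.

Lemma sorted_rev (T : Type) (g : rel T) (l : seq T) :
  symmetric g -> sorted g (rev l) = sorted g l.
Proof.
move=> sg; rewrite rev_sorted; case: l => //= a l.
by apply: eq_path => x y; rewrite sg.
Qed.

Lemma path_del_all (T : finType) (g : rel T) (S : {set T}) x p :
  path (del_rel g S) x p -> all (fun v => v \notin S) p.
Proof.
elim: p x => [|y p IH] x //= /andP [/andP [/andP [_ _] ->] /IH] //.
Qed.

Lemma path_del_g (T : finType) (g : rel T) (S : {set T}) x p :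
  path (del_rel g S) x p -> path g x p.
Proof.
by apply: sub_path => u v /= /andP [/andP [->]].
Qed.

Lemma connect_del_notin (T : finType) (g : rel T) (S : {set T}) x y :
  connect (del_rel g S) x y -> x \notin S -> y \notin S.
Proof.
move=> /connectP [p Hp ->] Hx.
case: (lastP p) Hp => [|p' a] // Hp.
have := path_del_all Hp; rewrite last_rcons => /allP; apply.
by rewrite mem_rcons mem_head.
Qed.

Lemma deg_ge_k (T : finType) (g : rel T) k :
  irreflexive g -> k_connected g k -> forall u, k <= deg g u.
Proof.
move=> ig [kT hk] u; rewrite leqNgt; apply/negP => Hlt.
set S := [set v | g u v].
have : exists y, y \notin u |: S.
  apply/existsP; rewrite -negb_forall; apply/negP => /forallP Hall.
  have : [set: T] \subset u |: S by apply/subsetP => x _; exact: Hall.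
  move=> /subset_leq_card; rewrite cardsT cardsU1; move: Hlt; rewrite /deg -/S.
  have kT' := kT; move: kT'; rewrite -cardsT.
  case: (u \notin S) => /=; lia.
move=> [y]; rewrite !inE negb_or => /andP [/eqP yu yS].
have uS : u \notin S by rewrite /S inE ig.
have yS' : y \notin S by move: yS; rewrite /S !inE.
have /connectP [p Hp Hl] := hk S Hlt u y uS yS'.
case: p Hp Hl => [|a p] /=; first by move=> _ Hl; apply: yu.
move=> /andP [/andP [/andP [gua _] aS] _] _; by move: aS; rewrite /S inE gua.
Qed.

Definition longest (T : finType) (g : rel T) (s : seq T) :=
  forall s', uniq s' -> sorted g s' -> size s' <= size s.

Lemma exists_longest (T : finType) (g : rel T) (x : T) :
  exists s, [/\ uniq s, sorted g s, 0 < size s & longest g s].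
Proof.
pose P m := [exists t : m.-tuple T, uniq t && sorted g t].
have exP : exists m, P m by exists 1; apply/existsP; exists [tuple x].
have ubP : forall m, P m -> m <= #|T|.
  move=> m /existsP [t /andP [ut _]].
  by rewrite -(size_tuple t) -(card_uniqP ut); apply: max_card.
case: (ex_maxnP exP ubP) => m /existsP [t /andP [ut st]] maxm.
exists t; split => //.
  rewrite size_tuple; apply: (maxm 1); apply/existsP; exists [tuple x]; done.
move=> s' us' ss'; rewrite size_tuple; apply: maxm.
by apply/existsP; exists (in_tuple s'); rewrite /= us' ss'.
Qed.

Lemma splice_contra (T : finType) (g : rel T) s s' Q :
  longest g s -> uniq s -> sorted g s' -> perm_eq s' (Q ++ s) -> uniq Q ->
  0 < size Q -> all (fun v => v \notin s) Q -> False.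
Proof.
move=> ls us ss' p uQ sQ aQ.
have us' : uniq s'.
  rewrite (perm_uniq p) cat_uniq uQ us andbT; apply/hasPn => v vs.
  apply/negP => vQ; move/allP: aQ => /(_ v vQ); by rewrite vs.
by have := ls s' us' ss'; rewrite (perm_size p) size_cat -{2}[size s]add0n leq_add2r leqNgt sQ.
Qed.

Lemma last_take (T : Type) (x0 : T) l n :
  0 < n -> n <= size l -> last x0 (take n l) = nth x0 l n.-1.
Proof. by case: n => // n _ H; rewrite (take_nth x0 H) last_rcons. Qed.

Lemma head_drop (T : Type) (x0 : T) l n : head x0 (drop n l) = nth x0 l n.
Proof. by rewrite -nth0 nth_drop addn0. Qed.

Lemma head_rev (T : Type) (x0 : T) l : head x0 (rev l) = last x0 l.
Proof. by case/lastP: l => // l a; rewrite rev_rcons last_rcons. Qed.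

Lemma last_rev (T : Type) (x0 : T) l : last x0 (rev l) = head x0 l.
Proof. by case: l => // a l; rewrite rev_cons last_rcons. Qed.

Lemma head_take (T : Type) (x0 : T) l n : 0 < n -> head x0 (take n l) = head x0 l.
Proof. by case: n => // n _; case: l. Qed.

Lemma head_cat1 (T : Type) (x0 : T) l1 l2 : 0 < size l1 -> head x0 (l1 ++ l2) = head x0 l1.
Proof. by case: l1. Qed.

Lemma jn_g (T : Type) (g : rel T) x0 l1 l2 :
  g (last x0 l1) (head x0 l2) -> jn g x0 l1 l2.
Proof. by move=> h; rewrite /jn h !orbT. Qed.


Lemma sorted_td (T : Type) (g : rel T) (x0 : T) l n :
  sorted g l -> sorted g (take n l) /\ sorted g (drop n l).
Proof.
move=> sl; have := sl; rewrite -{1}(cat_take_drop n l) (sorted_catE g x0).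
by move=> /and3P [].
Qed.

Lemma lemB (T : finType) (g : rel T) k (sg : symmetric g) (ig : irreflexive g)
  (hk : k_connected g k) x0 s1 (us : uniq (x0 :: s1)) (ss : sorted g (x0 :: s1))
  (ls : longest g (x0 :: s1)) z (hz : z \notin x0 :: s1) :
  exists I : {set T}, [/\ z \in I, x0 \in I,
     I \subset z |: [set v | v \in x0 :: s1], k + 2 <= #|I| &
     forall u v, u \in I -> v \in I -> ~~ g u v].
Proof.
set s := x0 :: s1.
have x0s : x0 \in s by rewrite mem_head.
set Ps := [set v | v \in s].
set H := [set u | connect (del_rel g Ps) z u].
have zPs : z \notin Ps by rewrite inE.
have Hz : z \in H by rewrite inE connect0.
have Hn : forall u, u \in H -> u \notin s.
  move=> u; rewrite inE => /connect_del_notin /(_ zPs); by rewrite inE.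
have symd : symmetric (del_rel g Ps).
  by move=> a b; rewrite /del_rel /= sg -!andbA; congr (_ && _); rewrite andbC.
have Hq : forall y y', y \in H -> y' \in H -> exists q, [/\ uniq (y :: q),
    path g y q, last y q = y' & all (fun v => v \notin s) (y :: q)].
  move=> y y' Hy Hy'.
  have Hy0 := Hy; have Hy0' := Hy'; rewrite inE in Hy0; rewrite inE in Hy0'.
  have : connect (del_rel g Ps) y y'.
    apply: (connect_trans _ Hy0'); by rewrite (sym_connect_sym symd).
  move=> /connectP [p Hp ->].
  case: (shortenP Hp) => p' Hp' up' _.
  exists p'; split => //; first exact: path_del_g Hp'.
  rewrite /= (Hn y Hy) /=; have := path_del_all Hp'; apply: sub_all => v.
  by rewrite inE.
have a1 : forall y, y \in H -> ~~ g x0 y.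
  move=> y Hy; apply/negP => gxy.
  apply: (@splice_contra _ g s (y :: s) [:: y]) => //=.
    by rewrite sg gxy.
  by rewrite andbT; exact: Hn.
have a2 : forall y, y \in H -> ~~ g (last x0 s1) y.
  move=> y Hy; apply/negP => gxy.
  apply: (@splice_contra _ g s (rcons s y) [:: y]) => //=.
      by rewrite rcons_path gxy andbT; exact: ss.
    by rewrite -[x0 :: rcons s1 y]/(rcons s y) perm_rcons.
  by rewrite andbT; exact: Hn.
set S := [set v | (v \in s) && [exists y, (y \in H) && g v y]].
pose succ v := nth x0 s (index v s).+1.
have SP : forall v, v \in S -> [/\ v \in s, (index v s).+1 < size s &
      exists2 y, y \in H & g v y].
  move=> v; rewrite inE => /andP [vs /existsP [y /andP [Hy gvy]]].
  split => //; last by exists y.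
  have := vs; rewrite -index_mem leq_eqVlt => /orP [/eqP ei|] //.
  exfalso; move/negP: (a2 y Hy); apply.
  have -> : last x0 s1 = v.
    by rewrite -[v](nth_index x0 vs) -[last x0 s1]/(last x0 s) -nth_last -ei.
  done.
have succ_s : forall v, v \in S -> succ v \in s.
  by move=> v /SP [_ iv _]; rewrite /succ mem_nth.
have succ_idx : forall v, v \in S -> index (succ v) s = (index v s).+1.
  by move=> v /SP [_ iv _]; rewrite /succ index_uniq.
have sub3 : forall i j, i <= j -> s = take i s ++ take (j - i) (drop i s) ++ drop j s.
  move=> i j ij.
  have -> : drop j s = drop (j - i) (drop i s) by rewrite drop_drop subnK.
  by rewrite !cat_take_drop.
have ss' : sorted g s := ss.
have b : forall v y', v \in S -> y' \in H -> ~~ g (succ v) y'.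
  move=> v y' Sv Hy'; have [vs iv [y Hy gvy]] := SP v Sv.
  apply/negP => gsy.
  have [q [uq pq lq aq]] := Hq y y' Hy Hy'.
  have [stk sdr] := sorted_td x0 (index v s).+1 ss'.
  apply: (@splice_contra _ g s (take (index v s).+1 s ++ (y :: q) ++ drop (index v s).+1 s) (y :: q)) => //.
    rewrite (sorted_catE g x0); apply/and3P; split => //.
      rewrite (sorted_catE g x0); apply/and3P; split => //.
      by apply: jn_g; rewrite /= lq head_drop sg.
    by apply: jn_g; rewrite last_take ?(ltnW iv) //= nth_index.
  by rewrite perm_catCA cat_take_drop.
have ckey : forall v w, v \in S -> w \in S -> index v s < index w s ->
    ~~ g (succ v) (succ w).
  move=> v w Sv Sw ij; have [vs iv [y Hy gvy]] := SP v Sv.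
  have [ws jw [y' Hy' gwy']] := SP w Sw.
  apply/negP => gss.
  have [q [uq pq lq aq]] := Hq y y' Hy Hy'.
  have nv := nth_index x0 vs; have nw := nth_index x0 ws.
  rewrite /succ in gss.
  move: ij iv jw nv nw gss; set i := index v s; set j := index w s => ij iv jw nv nw gss.
  set L := take i.+1 s; set D := drop i.+1 s; set M := take (j - i) D.
  set R := drop j.+1 s.
  have eR : R = drop (j - i) D by rewrite /R /D drop_drop; congr drop; move: ij; clear_all; lia.
  have eS : s = L ++ M ++ R by rewrite eR /L /M !cat_take_drop.
  have szD : size D = size s - i.+1 by rewrite size_drop.
  have szM : size M = j - i by rewrite /M size_takel // szD; move: ij jw; clear_all; lia.
  have : sorted g (L ++ M ++ R) by rewrite -eS.
  rewrite (sorted_catE g x0) (sorted_catE g x0) => /and3P [sL /and3P [sM sR _] _].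
  have lastL : last x0 L = v by rewrite /L last_take ?(ltnW iv) //= nv.
  have headM : head x0 M = nth x0 s i.+1 by rewrite /M head_take ?subn_gt0 // /D head_drop.
  have lastM : last x0 M = w.
    rewrite /M last_take ?subn_gt0 ?szD //; last by move: ij jw; clear_all; lia.
    rewrite /D nth_drop; have -> : i.+1 + (j - i).-1 = j by move: ij; clear_all; lia.
    exact: nw.
  have headR : head x0 R = nth x0 s j.+1 by rewrite /R head_drop.
  apply: (@splice_contra _ g s (L ++ (y :: q) ++ rev M ++ R) (y :: q)) => //.
    rewrite (sorted_catE g x0); apply/and3P; split => //.
      rewrite (sorted_catE g x0); apply/and3P; split => //.
        rewrite (sorted_catE g x0) sorted_rev //; apply/and3P; split => //.
        by apply: jn_g; rewrite last_rev headM headR.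
      apply: jn_g; rewrite /= lq head_cat1 ?size_rev ?szM ?subn_gt0 //.
      by rewrite head_rev lastM sg.
    by apply: jn_g; rewrite lastL.
  apply: (@perm_trans _ ((y :: q) ++ L ++ rev M ++ R)); first by rewrite perm_catCA.
  rewrite perm_cat2l.
  apply: (@perm_trans _ (L ++ M ++ R)); last by rewrite -eS.
  by rewrite perm_cat2l perm_cat2r perm_rev.
have c : forall v w, v \in S -> w \in S -> ~~ g (succ v) (succ w).
  move=> v w Sv Sw.
  case: (ltngtP (index v s) (index w s)) => h; first exact: ckey.
    by rewrite sg; apply: ckey.
  have [vs _ _] := SP v Sv; have [ws _ _] := SP w Sw.
  have -> : v = w by rewrite -(nth_index x0 vs) h nth_index.
  by rewrite ig.
have d : forall v, v \in S -> ~~ g x0 (succ v).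
  move=> v Sv; have [vs iv [y Hy gvy]] := SP v Sv; apply/negP => gxs.
  have nv := nth_index x0 vs; rewrite /succ in gxs.
  move: iv nv gxs; set i := index v s => iv nv gxs.
  set L := take i.+1 s; set D := drop i.+1 s.
  have eS : s = L ++ D by rewrite cat_take_drop.
  have [sL sD] := sorted_td x0 i.+1 ss'.
  have szL : size L = i.+1 by rewrite /L size_takel // ltnW.
  apply: (@splice_contra _ g s (y :: (rev L ++ D)) [:: y]) => //.
    rewrite -cat1s (sorted_catE g x0); apply/and3P; split => //.
      rewrite (sorted_catE g x0) sorted_rev //; apply/and3P; split => //.
      by apply: jn_g; rewrite last_rev /L head_take // /D head_drop.
    apply: jn_g; rewrite /= head_cat1 ?size_rev ?szL // head_rev /L last_take ?(ltnW iv) //=.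
    by rewrite nv sg.
  rewrite /= perm_cons.
  apply: (@perm_trans _ (L ++ D)); last by rewrite -eS.
  by rewrite perm_cat2r perm_rev.
  by rewrite /= andbT; exact: Hn.
have x0S : x0 \notin S.
  rewrite inE x0s /=; apply/existsPn => y1; apply/negP => /andP [Hy1 gy1].
  by move/negP: (a1 y1 Hy1).
have zS : z \notin S by rewrite inE (negbTE hz).
have kS : k <= #|S|.
  rewrite leqNgt; apply/negP => Slt.
  have := hk.2 S Slt z x0 zS x0S.
  suff clos : forall p u, u \in H -> path (del_rel g S) u p -> last u p \in H.
    move=> /connectP [p Hp e]; have := clos p z Hz Hp; rewrite -e => Hx0.
    by move: (Hn x0 Hx0); rewrite x0s.
  elim => [|a p IH] u Hu //= /andP [/andP [/andP [gua uS] aS] Hp]; apply: IH Hp.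
  have as_ : a \notin s.
    apply/negP => as_; move/negP: aS; apply; rewrite inE as_ /=.
    by apply/existsP; exists u; rewrite Hu sg gua.
  have Hu' := Hu; rewrite inE in Hu'; rewrite inE.
  apply: (connect_trans Hu'); apply: connect1.
  by rewrite /del_rel /= gua !in_set (negbTE (Hn u Hu)) (negbTE as_).
have succ_inj : {in S &, injective succ}.
  move=> v w Sv Sw e; have := succ_idx v Sv; rewrite e succ_idx // => /succn_inj e'.
  have [vs _ _] := SP v Sv; have [ws _ _] := SP w Sw.
  by rewrite -(nth_index x0 vs) -e' nth_index.
exists (z |: (x0 |: (succ @: S))); split.
- by rewrite setU11.
- by rewrite !inE eqxx orbT.
- apply/subsetP => u /setU1P [->|/setU1P [->|/imsetP [v Sv ->]]]; rewrite in_setU1 in_set.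
  + by rewrite eqxx.
  + by rewrite x0s orbT.
  + by rewrite succ_s ?orbT.
- rewrite !cardsU1 card_in_imset //.
  have -> : x0 \notin succ @: S.
    apply/imsetP => -[v Sv e]; have := succ_idx v Sv; rewrite -e /= eqxx //.
  have -> : z \notin x0 |: succ @: S.
    rewrite !inE negb_or; apply/andP; split.
      by apply/eqP => e; move: hz; rewrite e x0s.
    apply/imsetP => -[v Sv e]; move: hz; rewrite e; by rewrite succ_s.
  rewrite /=; move: kS; clear_all; lia.
- move=> u v; rewrite !inE.
  move=> /predU1P [->|/predU1P [->|/imsetP [a Sa ->]]] /predU1P [->|/predU1P [->|/imsetP [b0 Sb ->]]].
  + by rewrite ig.
  + by rewrite sg a1.
  + by rewrite sg b.
  + by rewrite a1.
  + by rewrite ig.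
  + by rewrite d.
  + by rewrite b.
  + by rewrite sg d.
  + by rewrite c.
Qed.

Lemma card_pairs (T : finType) (g : rel T) (A : {set T}) :
  #|[set p : T * T | (p.1 \in A) && g p.1 p.2]| = \sum_(u in A) deg g u.
Proof.
rewrite [RHS]big_mkcond.
rewrite (eq_bigr (fun u => \sum_v (if (u \in A) && g u v then 1 else 0))); last first.
  move=> u _; case: (boolP (u \in A)) => uA.
    rewrite /deg -sum1_card big_mkcond; apply: eq_bigr => v _.
    by rewrite inE.
  by rewrite big1.
rewrite (pair_big predT predT (fun u v => if (u \in A) && g u v then 1 else 0)).
rewrite -sum1_card big_mkcond; apply: eq_big => // -[u v] _.
by rewrite inE.
Qed.

Definition indep (T : finType) (g : rel T) (A : {set T}) :=
  forall u v, u \in A -> v \in A -> ~~ g u v.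

Definition Eset (T : finType) (g : rel T) :=
  [set B : {set T} | [exists x, [exists y, g x y && (B == [set x; y])]]].

Lemma imX (T : finType) (g : rel T) (A : {set T}) :
  irreflexive g -> indep g A ->
  let f := fun p : T * T => [set p.1; p.2] in
  f @: [set p : T * T | (p.1 \in A) && g p.1 p.2] \subset Eset g /\
  #|f @: [set p : T * T | (p.1 \in A) && g p.1 p.2]| = \sum_(u in A) deg g u.
Proof.
move=> ig iA f; split.
  apply/subsetP => B /imsetP [[a b]]; rewrite inE /= => /andP [aA gab] ->.
  by rewrite inE; apply/existsP; exists a; apply/existsP; exists b; rewrite gab eqxx.
rewrite -card_pairs card_in_imset //.
move=> [a b] [a' b']; rewrite !inE /= => /andP [aA gab] /andP [a'A ga'b'] e.
have bA : b \notin A by apply/negP => bA; move: (iA a b aA bA); rewrite gab.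
have b'A : b' \notin A by apply/negP => bA'; move: (iA a' b' a'A bA'); rewrite ga'b'.
have : a \in [set a'; b'] by rewrite /f /= in e; rewrite -e set21.
case/set2P => ea; last by move: b'A; rewrite -ea aA.
subst a'.
have : b \in [set a; b'] by rewrite /f /= in e; rewrite -e set22.
case/set2P => eb; last by rewrite eb.
by move: bA; rewrite eb aA.
Qed.

Lemma E1 (T : finType) (g : rel T) (A : {set T}) :
  irreflexive g -> indep g A -> \sum_(u in A) deg g u <= num_edges g.
Proof.
move=> ig iA; have [sub <-] := imX ig iA.
exact: subset_leq_card.
Qed.

Lemma E2 (T : finType) (g : rel T) (A : {set T}) :
  symmetric g -> indep g A -> num_edges g <= \sum_(u in ~: A) deg g u.
Proof.
move=> sg iA; rewrite -card_pairs.
apply: (leq_trans _ (leq_imset_card (fun p : T * T => [set p.1; p.2]) _)).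
apply: subset_leq_card; apply/subsetP => B.
rewrite inE => /existsP [x /existsP [y /andP [gxy /eqP ->]]].
case: (boolP (x \in A)) => xA.
  have yA : y \notin A by apply/negP => yA; move: (iA x y xA yA); rewrite gxy.
  apply/imsetP; exists (y, x); first by rewrite !inE /= yA sg gxy.
  by rewrite /= setUC.
apply/imsetP; exists (x, y) => //; by rewrite !inE /= xA gxy.
Qed.

Lemma E3 (T : finType) (g : rel T) (A : {set T}) :
  irreflexive g -> indep g A -> \sum_(u in A) deg g u = num_edges g ->
  forall u v, g u v -> (u \in A) || (v \in A).
Proof.
move=> ig iA heq u v guv.
have [sub ecard] := imX ig iA.
set F := (fun p : T * T => [set p.1; p.2]) @: _ in sub ecard.
have /eqP eF : F == Eset g by rewrite eqEcard sub ecard heq /=; exact: leqnn.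
have : [set u; v] \in F.
  by rewrite eF inE; apply/existsP; exists u; apply/existsP; exists v; rewrite guv eqxx.
move=> /imsetP [[a b]]; rewrite inE /= => /andP [aA _] e.
have : a \in [set u; v] by rewrite e set21.
by case/set2P => <-; rewrite aA ?orbT.
Qed.

Lemma min_le_deg (T : finType) (g : rel T) u : min_deg g <= deg g u.
Proof.
rewrite /min_deg; have : u \in index_enum T by rewrite mem_index_enum.
elim: (index_enum T) => // a r IH; rewrite big_cons inE => /predU1P [->|/IH h].
  exact: geq_minl.
exact: leq_trans (geq_minr _ _) h.
Qed.

Lemma k_le_min (T : finType) (g : rel T) k :
  k < #|T| -> (forall u, k <= deg g u) -> k <= min_deg g.
Proof.
move=> kT hd; rewrite /min_deg; elim/big_ind: _ => //; first exact: ltnW.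
by move=> a b ha hb; rewrite leq_min ha hb.
Qed.

Lemma deg_le_max (T : finType) (g : rel T) u : deg g u <= max_deg g.
Proof. exact: (leq_bigmax u). Qed.

Lemma count_card (T : finType) (s : seq T) (P : pred T) :
  uniq s -> count P s = #|[set v | (v \in s) && P v]|.
Proof.
move=> us; rewrite -size_filter -(card_uniqP (filter_uniq P us)).
by apply: eq_card => v; rewrite mem_filter inE andbC.
Qed.

Lemma subset_card_exact (T : finType) (A : {set T}) m :
  m <= #|A| -> exists B : {set T}, B \subset A /\ #|B| = m.
Proof.
elim: m => [|m IH] hm; first by exists set0; rewrite sub0set cards0.
have [B [BA cB]] := IH (ltnW hm).
have : exists x, x \in A :\: B.
  apply/set0Pn; rewrite -card_gt0 cardsD (setIidPr BA) cB; lia.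
move=> [x]; rewrite inE => /andP [xB xA].
exists (x |: B); split; first by rewrite subUset sub1set xA BA.
by rewrite cardsU1 xB cB.
Qed.

Lemma alt_count (T : finType) (g : rel T) (I : {set T}) :
  (forall u v, g u v -> (u \in I) != (v \in I)) ->
  forall n s x, size s <= n -> path g x s -> x \in I ->
  count [pred v | v \notin I] (x :: s) <= count [pred v | v \in I] (x :: s).
Proof.
move=> alt; elim => [|n IH] s x hs p xI.
  by case: s hs p => //=; rewrite xI.
case: s hs p => [|y s] /=; first by rewrite xI.
move=> hs /andP [gxy p].
have yI : y \notin I by move: (alt x y gxy); rewrite xI; case: (y \in I).
rewrite (negbTE yI) /=.
case: s hs p => [|w s] /=; first by rewrite xI.
move=> hs /andP [gyw p].
have wI : w \in I by move: (alt y w gyw); rewrite (negbTE yI); case: (w \in I).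
rewrite wI.
have := IH s w _ p wI; rewrite /= wI /=.
move=> /(_ _); rewrite xI /=.
have h : size s <= n by lia.
move=> /(_ h); lia.
Qed.

From mathcomp Require Import all_algebra.
From mathcomp Require Import ring lra.
Import Order.TTheory GRing.Theory Num.Theory.
Local Open Scope ring_scope.

Lemma c1 (R : realFieldType) (K m dl dh e s Z : R) :
  0 < K -> 0 < dl -> dl <= dh -> s <= e -> 0 <= s ->
  Z <= dh * s + m * dh ^+ 2 ->
  m * dh ^+ 2 + e ^+ 2 / (2 * K) + K * dh ^+ 3 / (2 * dl) <= Z ->
  dh = dl /\ e = s.
Proof.
move=> K0 dl0 ddh se s0 hZ.
set A := e ^+ 2 / (2 * K); set B := K * dh ^+ 3 / (2 * dl) => hC.
have hA : A * (2 * K) = e ^+ 2 by rewrite /A mulfVK // mulf_neq0 // ?gt_eqF.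
have hB : B * (2 * dl) = K * dh ^+ 3 by rewrite /B mulfVK // mulf_neq0 // ?gt_eqF.
have h1 : A + B <= dh * s by lra.
have dh0 : 0 < dh by lra.
have h2 : A + B <= dh * e by nra.
have h3 : dl * e ^+ 2 + K ^+ 2 * dh ^+ 3 <= 2 * K * dl * dh * e.
  have : (A + B) * (2 * K * dl) <= dh * e * (2 * K * dl).
    by apply: ler_wpM2r => //; nra.
  have -> : (A + B) * (2 * K * dl) = dl * e ^+ 2 + K ^+ 2 * dh ^+ 3.
    rewrite mulrDl; have -> : A * (2 * K * dl) = A * (2 * K) * dl by ring.
    have -> : B * (2 * K * dl) = B * (2 * dl) * K by ring.
    by rewrite hA hB; ring.
  by move=> h; nra.
have h4 : dl * (e - K * dh) ^+ 2 + K ^+ 2 * dh ^+ 2 * (dh - dl) <= 0.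
  have -> : dl * (e - K * dh) ^+ 2 + K ^+ 2 * dh ^+ 2 * (dh - dl) =
    dl * e ^+ 2 + K ^+ 2 * dh ^+ 3 - 2 * K * dl * dh * e by ring.
  lra.
have h5 : 0 <= dl * (e - K * dh) ^+ 2 by rewrite mulr_ge0 ?sqr_ge0 // ltW.
have h6 : 0 <= K ^+ 2 * dh ^+ 2 * (dh - dl) by rewrite !mulr_ge0 ?sqr_ge0 //; lra.
have h7 : K ^+ 2 * dh ^+ 2 * (dh - dl) = 0 by lra.
have edh : dh = dl.
  have pos : 0 < K ^+ 2 * dh ^+ 2 by rewrite mulr_gt0 // exprn_gt0.
  move: h7 => /eqP; rewrite mulf_eq0 (gt_eqF pos) /= subr_eq0.
  by move/eqP.
have h8 : dl * (e - K * dh) ^+ 2 = 0 by lra.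
have eK : e = K * dh.
  move: h8 => /eqP; rewrite mulf_eq0 (gt_eqF dl0) /= sqrf_eq0 subr_eq0.
  by move/eqP.
split => //.
have : A + B = dh * e.
  have hAB : (A + B) * (2 * K * dl) = dh * e * (2 * K * dl).
    have -> : (A + B) * (2 * K * dl) = A * (2 * K) * dl + B * (2 * dl) * K by ring.
    rewrite hA hB eK edh; ring.
  apply: (mulIf _ hAB); apply: mulf_neq0; first by apply: mulf_neq0 => //; lra.
  lra.
move=> hAB; nra.
Qed.

Lemma c2 (R : realFieldType) (K m dl e s F X : R) :
  0 < K -> 0 < dl -> K * dl <= s -> s <= e -> 0 <= X ->
  dl ^+ 2 * s + m * dl ^+ 3 + X <= F ->
  F <= m * dl ^+ 3 + dl * (2 * K ^+ 2 * dl ^+ 2 - e ^+ 2) / K ->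
  X = 0 /\ e = s.
Proof.
move=> K0 dl0 hs se X0 hF hC.
have h1 : dl ^+ 2 * s + X <= dl * (2 * K ^+ 2 * dl ^+ 2 - e ^+ 2) / K by lra.
have h2 : K * (dl ^+ 2 * s + X) <= dl * (2 * K ^+ 2 * dl ^+ 2 - e ^+ 2).
  have eq1 : K * (dl * (2 * K ^+ 2 * dl ^+ 2 - e ^+ 2) / K) = dl * (2 * K ^+ 2 * dl ^+ 2 - e ^+ 2).
    by field; rewrite gt_eqF.
  by move: (ler_wpM2l (ltW K0) h1); rewrite eq1.
have e0 : 0 <= K * dl by rewrite mulr_ge0 // ltW.
have he : (K * dl) ^+ 2 <= e ^+ 2 by rewrite ler_sqr ?nnegrE //; lra.
have hs2 : K ^+ 2 * dl ^+ 3 <= K * dl ^+ 2 * s.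
  have -> : K ^+ 2 * dl ^+ 3 = (K * dl ^+ 2) * (K * dl) by ring.
  by rewrite ler_wpM2l // mulr_ge0 ?sqr_ge0 // ltW.
have he2 : K ^+ 2 * dl ^+ 3 <= dl * e ^+ 2.
  have -> : K ^+ 2 * dl ^+ 3 = dl * (K * dl) ^+ 2 by ring.
  by rewrite ler_wpM2l // ltW.
have h3 : K * X + (K * dl ^+ 2 * s - K ^+ 2 * dl ^+ 3) + (dl * e ^+ 2 - K ^+ 2 * dl ^+ 3) <= 0.
  have -> : K * X + (K * dl ^+ 2 * s - K ^+ 2 * dl ^+ 3) + (dl * e ^+ 2 - K ^+ 2 * dl ^+ 3)
    = K * (dl ^+ 2 * s + X) - dl * (2 * K ^+ 2 * dl ^+ 2 - e ^+ 2) by ring.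
  lra.
have KX : 0 <= K * X by rewrite mulr_ge0 // ltW.
have hX : K * X = 0 by lra.
have hs' : K * dl ^+ 2 * s = K ^+ 2 * dl ^+ 3 by lra.
have he' : dl * e ^+ 2 = K ^+ 2 * dl ^+ 3 by lra.
split.
  by move: hX => /eqP; rewrite mulf_eq0 (gt_eqF K0) => /eqP.
have sK : s = K * dl.
  have : (K * dl ^+ 2) * s = (K * dl ^+ 2) * (K * dl) by rewrite hs'; ring.
  apply: mulfI; rewrite mulf_neq0 ?gt_eqF // exprn_gt0 //.
have eK : e ^+ 2 = (K * dl) ^+ 2.
  have : dl * e ^+ 2 = dl * (K * dl) ^+ 2 by rewrite he'; ring.
  by apply: mulfI; rewrite gt_eqF.
have : e = K * dl.
  move: eK => /eqP; rewrite eqf_sqr => /orP [/eqP //|/eqP h]; exfalso.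
  have : 0 < K * dl by rewrite mulr_gt0.
  lra.
by move=> ->.
Qed.

Lemma inner_le (R : realFieldType) (K m dl dh e : R) :
  0 < K -> 0 <= m -> 0 <= e -> e <= m * dh ->
  2 * K * (K * dl ^+ 2 + e ^+ 2 / m) - e ^+ 2 - 2 * K * m * dh ^+ 2
    <= 2 * K ^+ 2 * dl ^+ 2 - e ^+ 2.
Proof.
move=> K0 m0 e0 em.
suff : e ^+ 2 / m <= m * dh ^+ 2.
  move=> h; have h2 : 2 * K * (e ^+ 2 / m) <= 2 * K * (m * dh ^+ 2).
    by rewrite ler_wpM2l // mulr_ge0 // ltW.
  have -> : 2 * K * (K * dl ^+ 2 + e ^+ 2 / m) - e ^+ 2 - 2 * K * m * dh ^+ 2
    = 2 * K ^+ 2 * dl ^+ 2 - e ^+ 2 + (2 * K * (e ^+ 2 / m) - 2 * K * (m * dh ^+ 2)) by ring.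
  lra.
case: (ltrgt0P m) m0 => // [mpos _|-> _]; last by rewrite invr0 !mulr0 mul0r.
rewrite ler_pdivrMr // ; have -> : m * dh ^+ 2 * m = (m * dh) ^+ 2 by ring.
by rewrite ler_sqr ?nnegrE //; lra.
Qed.

Lemma c3 (R : realFieldType) (K m dl dh e s F X : R) :
  0 < K -> 0 < dl -> K * dl <= s -> s <= e -> 0 <= X -> 0 <= m -> e <= m * dh ->
  dl ^+ 2 * s + m * dl ^+ 3 + X <= F ->
  F <= m * dl ^+ 3 + dl / K * (2 * K * (K * dl ^+ 2 + e ^+ 2 / m) - e ^+ 2
                         - 2 * K * m * dh ^+ 2) ->
  X = 0 /\ e = s.
Proof.
move=> K0 dl0 hs se X0 m0 em hF hC; apply: (c2 K0 dl0 hs se X0 hF).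
apply: (le_trans hC); rewrite lerD2l.
have -> : dl * (2 * K ^+ 2 * dl ^+ 2 - e ^+ 2) / K = dl / K * (2 * K ^+ 2 * dl ^+ 2 - e ^+ 2).
  by rewrite mulrAC.
apply: ler_wpM2l; first by rewrite divr_ge0 // ltW.
apply: inner_le => //.
have : 0 <= K * dl by rewrite mulr_ge0 // ltW.
lra.
Qed.

Lemma c4 (R : realFieldType) (K m dl dh e s Iv : R) :
  0 < K -> 0 < dl -> dl <= dh -> K * dl <= s -> s <= e ->
  K / dh + m / dh <= Iv ->
  Iv <= m / dh + (2 * K ^+ 2 * dl ^+ 2 - e ^+ 2) / (K * dh ^+ 3) ->
  dh = dl /\ e = s.
Proof.
move=> K0 dl0 ddh hs se hI hC.
have dh0 : 0 < dh by lra.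
have h1 : K / dh <= (2 * K ^+ 2 * dl ^+ 2 - e ^+ 2) / (K * dh ^+ 3) by lra.
have pos : 0 < K * dh ^+ 3 by rewrite mulr_gt0 // exprn_gt0.
have h2 : K ^+ 2 * dh ^+ 2 <= 2 * K ^+ 2 * dl ^+ 2 - e ^+ 2.
  move: h1; rewrite ler_pdivlMr // => h1; apply: (le_trans _ h1).
  rewrite le_eqVlt; apply/orP; left; apply/eqP; field; rewrite gt_eqF //.
have e0 : 0 <= K * dl by rewrite mulr_ge0 // ltW.
have he : (K * dl) ^+ 2 <= e ^+ 2 by rewrite ler_sqr ?nnegrE //; lra.
have h3 : K ^+ 2 * dh ^+ 2 <= K ^+ 2 * dl ^+ 2.
  move: he; rewrite exprMn; lra.
have h4 : dh ^+ 2 <= dl ^+ 2 by rewrite -(ler_pM2l (exprn_gt0 2 K0)).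
have h5 : dh <= dl by rewrite -ler_sqr ?nnegrE // ltW.
have edh : dh = dl by apply/eqP; rewrite eq_le h5 ddh.
split => //.
have h6 : e ^+ 2 <= (K * dl) ^+ 2.
  rewrite exprMn; move: h2; rewrite edh; lra.
have : e <= K * dl by rewrite -ler_sqr ?nnegrE //; lra.
lra.
Qed.

Lemma c5 (R : realFieldType) (K m dl dh e s Iv : R) :
  0 < K -> 0 < dl -> dl <= dh -> K * dl <= s -> s <= e -> 0 <= m -> e <= m * dh ->
  K / dh + m / dh <= Iv ->
  Iv <= m / dh + (K * dh ^+ 3)^-1 * (2 * K * (K * dl ^+ 2 + e ^+ 2 / m) - e ^+ 2
                         - 2 * K * m * dh ^+ 2) ->
  dh = dl /\ e = s.
Proof.
move=> K0 dl0 ddh hs se m0 em hI hC; apply: (c4 K0 dl0 ddh hs se hI).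
apply: (le_trans hC); rewrite lerD2l mulrC.
apply: ler_wpM2r; first by rewrite invr_ge0 mulr_ge0 // ?exprn_ge0 // ltW //; lra.
apply: inner_le => //.
have : 0 <= K * dl by rewrite mulr_ge0 // ltW.
lra.
Qed.

Lemma cube1 (R : realFieldType) (dl d : R) : 1 <= dl -> dl <= d ->
  dl ^+ 2 * d + (d - dl) <= d ^+ 3.
Proof.
move=> h1 h2.
have : 0 <= (d - dl) * (d * (d + dl) - 1) by apply: mulr_ge0; nra.
have -> : d ^+ 3 = dl ^+ 2 * d + (d - dl) + (d - dl) * (d * (d + dl) - 1) by ring.
lra.
Qed.

Lemma cube2 (R : realFieldType) (dl d : R) : 1 <= dl -> dl <= d ->
  dl ^+ 3 + (d - dl) <= d ^+ 3.
Proof.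
move=> h1 h2.
have : 0 <= (d - dl) * (d ^+ 2 + d * dl + dl ^+ 2 - 1) by apply: mulr_ge0; nra.
have -> : d ^+ 3 = dl ^+ 3 + (d - dl) + (d - dl) * (d ^+ 2 + d * dl + dl ^+ 2 - 1) by ring.
lra.
Qed.

Lemma sum_split (R : realFieldType) (T : finType) (I : {set T}) (F : T -> R) :
  \sum_u F u = \sum_(u in I) F u + \sum_(u in ~: I) F u.
Proof.
rewrite (bigID (fun u => u \in I)) /=; congr (_ + _).
by apply: eq_bigl => u; rewrite inE.
Qed.

Lemma sum_const_card (R : realFieldType) (T : finType) (A : {set T}) (c : R) :
  \sum_(u in A) c = (#|A|)%:R * c.
Proof. by rewrite sumr_const mulr_natl. Qed.

Lemma sums (R : realFieldType) (T : finType) (g : rel T) (I : {set T}) (dl dh : R) :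
  1 <= dl -> dl <= dh -> (forall u, dl <= (deg g u)%:R <= dh) ->
  [/\ zagreb1 R g <= dh * \sum_(u in I) (deg g u)%:R + (#|~: I|)%:R * dh ^+ 2,
      dl ^+ 2 * \sum_(u in I) (deg g u)%:R + (#|~: I|)%:R * dl ^+ 3
         + \sum_u ((deg g u)%:R - dl) <= forgotten R g &
      (#|I|)%:R / dh + (#|~: I|)%:R / dh <= inv_deg R g].
Proof.
move=> dl1 ddh hd.
have dlu : forall u, dl <= (deg g u)%:R by move=> u; case/andP: (hd u).
have duh : forall u, (deg g u)%:R <= dh by move=> u; case/andP: (hd u).
have d0 : forall u, 0 < (deg g u)%:R :> R by move=> u; have := dlu u; lra.
have dh0 : 0 < dh by lra.
split.
- rewrite /zagreb1 (sum_split I) mulr_sumr; apply: lerD.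
    apply: ler_sum => u _; rewrite expr2 ler_wpM2r // ltW //.
  rewrite -sum_const_card; apply: ler_sum => u _.
  by rewrite ler_sqr ?nnegrE // ltW // (lt_le_trans (d0 u)).
- rewrite /forgotten (sum_split I (fun u => (deg g u)%:R ^+ 3)).
  rewrite (sum_split I (fun u => (deg g u)%:R - dl)) mulr_sumr.
  rewrite -sum_const_card addrACA -!big_split /=; apply: lerD.
    by apply: ler_sum => u _; apply: cube1.
  by apply: ler_sum => u _; apply: cube2.
- rewrite /inv_deg (sum_split I) !mulr_natl -!sumr_const; apply: lerD.
    by apply: ler_sum => u _; rewrite lef_pV2 ?posrE.
  by apply: ler_sum => u _; rewrite lef_pV2 ?posrE.
Qed.


Unset Implicit Arguments.

Theorem theorem3 (R : realFieldType) (T : finType) (g : rel T) (k : nat) :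
  simple_graph g -> (1 <= k)%N -> k_connected g k -> (9 <= #|T|)%N ->
  let n : R := (#|T|)%:R in
  let kk : R := k%:R in
  let e : R := (num_edges g)%:R in
  let d : R := (min_deg g)%:R in
  let D : R := (max_deg g)%:R in
  (zagreb1 R g >= (n - kk - 2) * D ^+ 2 + e ^+ 2 / (2 * (kk + 2))
                     + (kk + 2) * D ^+ 3 / (2 * d)) \/
     (
      forgotten R g <= (n - kk - 2) * d ^+ 3
                     + d * (2 * (kk + 2) ^+ 2 * d ^+ 2 - e ^+ 2) / (kk + 2)) \/
     (
      forgotten R g <= (n - kk - 2) * d ^+ 3
                     + d / (kk + 2) * (2 * (kk + 2) * ((kk + 2) * d ^+ 2
                         + e ^+ 2 / (n - kk - 2)) - e ^+ 2
                         - 2 * (kk + 2) * (n - kk - 2) * D ^+ 2)) \/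
     (inv_deg R g <= (n - kk - 2) / D
                     + (2 * (kk + 2) ^+ 2 * d ^+ 2 - e ^+ 2) / ((kk + 2) * D ^+ 3)) \/
     (inv_deg R g <= (n - kk - 2) / D
                     + ((kk + 2) * D ^+ 3)^-1 * (2 * (kk + 2) * ((kk + 2) * d ^+ 2
                         + e ^+ 2 / (n - kk - 2)) - e ^+ 2
                         - 2 * (kk + 2) * (n - kk - 2) * D ^+ 2)) ->
  traceable g.
Proof.
move=> [sg ig] k1 hk n9 n kk e d D.
have kT : (k < #|T|)%N by case: hk.
have degk := deg_ge_k ig hk.
have dk : (k <= min_deg g)%N := k_le_min kT degk.
have /card_gt0P [x _] : (0 < #|T|)%N by apply: leq_trans n9.
have [s [us ss s0 ls]] := exists_longest g x.
case: s us ss s0 ls => [//|x0 s1] us ss _ ls.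
case: (boolP [forall v, v \in x0 :: s1]) => [/forallP allv|].
  by exists x0, s1; split.
move=> /forallPn [h hs].
have [Ih [hI x0I IhS cIh iIh]] := lemB sg ig hk us ss ls hs.
have hx0 : h != x0 by apply/eqP => e0; move: hs; rewrite e0 mem_head.
have : (k <= #|Ih :\: [set h; x0]|)%N.
  have := cardsID [set h; x0] Ih.
  have : (#|Ih :&: [set h; x0]| <= #|[set h; x0]|)%N by apply: subset_leq_card; apply: subsetIr.
  rewrite cards2 hx0; move: cIh; clear_all; lia.
move=> /subset_card_exact [B [BIh cB]].
set I := h |: (x0 |: B).
have BIh' : B \subset Ih := subset_trans BIh (subsetDl _ _).
have IIh : I \subset Ih by rewrite !subUset !sub1set hI x0I BIh'.
have iI : indep g I := fun u v uI vI => iIh u v (subsetP IIh u uI) (subsetP IIh v vI).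
have hB : h \notin B by apply/negP => /(subsetP BIh); rewrite !inE eqxx.
have x0B : x0 \notin B by apply/negP => /(subsetP BIh); rewrite !inE eqxx orbT.
have cI : #|I| = k.+2.
  rewrite /I !cardsU1 cB x0B !inE negb_or hx0 hB /=; clear_all; lia.
have x0I' : x0 \in I by rewrite !inE eqxx orbT.
have hI' : h \in I by rewrite !inE eqxx.
clearbody I.
have hd : forall u, d <= (deg g u)%:R <= D by move=> u; rewrite !ler_nat min_le_deg deg_le_max.
have d1 : 1 <= d by rewrite /d ler1n; apply: leq_trans k1 dk.
have dD : d <= D by case/andP: (hd x); apply: le_trans.
have [hZ hF hIv] := sums I d1 dD hd.
have cIR : (#|I|)%:R = kk + 2 :> R by rewrite cI -addn2 natrD.
have cJR : (#|~: I|)%:R = n - kk - 2 :> R.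
  have := cardsC I; rewrite cI => /(congr1 (fun m => m%:R : R)).
  rewrite natrD -addn2 natrD -/n -/kk; clear_all; lra.
rewrite cIR cJR in hIv; rewrite cJR in hZ hF.
move: hZ hF; set sI := \sum_(u in I) (deg g u)%:R => hZ hF.
have hs1 : (kk + 2) * d <= sI.
  rewrite -cIR -sum_const_card; apply: ler_sum => u _; by case/andP: (hd u).
have hse : sI <= e by rewrite /sI -natr_sum ler_nat; exact: E1 ig iI.
have het : e <= \sum_(u in ~: I) (deg g u)%:R.
  by rewrite -natr_sum ler_nat; exact: E2 sg iI.
have htm : \sum_(u in ~: I) (deg g u)%:R <= (n - kk - 2) * D.
  rewrite -cJR -sum_const_card; apply: ler_sum => u _; by case/andP: (hd u).
have K0 : 0 < kk + 2 :> R by have := ler0n R k; rewrite -/kk; clear_all; lra.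
have d0 : 0 < d by move: d1; clear_all; lra.
have m0 : 0 <= n - kk - 2 by rewrite -cJR ler0n.
have X0 : 0 <= \sum_u ((deg g u)%:R - d).
  by apply: sumr_ge0 => u _; case/andP: (hd u) => h1 _; move: h1; clear_all; lra.
have em : e <= (n - kk - 2) * D := le_trans het htm.
have s0' : 0 <= sI by apply: sumr_ge0 => u _; apply: ler0n.
move=> conds.
have key : ((\sum_u ((deg g u)%:R - d) = 0) \/ D = d) /\ e = sI.
  clear -conds K0 d0 dD hse s0' hZ hs1 X0 hF m0 em hIv.
  case: conds => [c|[c|[c|[c|c]]]].
  - by have [h1 h2] := c1 K0 d0 dD hse s0' hZ c; split; [right|].
  - by have [h1 h2] := c2 K0 d0 hs1 hse X0 hF c; split; [left|].
  - by have [h1 h2] := c3 K0 d0 hs1 hse X0 m0 em hF c; split; [left|].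
  - by have [h1 h2] := c4 K0 d0 dD hs1 hse hIv c; split; [right|].
  - by have [h1 h2] := c5 K0 d0 dD hs1 hse m0 em hIv c; split; [right|].
clear conds.
have reg : forall u, deg g u = min_deg g.
  move=> u; apply/eqP; rewrite -(eqr_nat R); apply/eqP.
  case: key => [[hX|hD] _].
    have Xge : forall v : T, true -> 0 <= (deg g v)%:R - d.
      by move=> v _; case/andP: (hd v) => h1 _; move: h1; clear_all; lra.
    have h0 := psumr_eq0P Xge hX (i := u) isT.
    by apply/eqP; rewrite -subr_eq0; apply/eqP; exact: h0.
  by case/andP: (hd u); rewrite hD -/d => h1 h2; apply/eqP; rewrite eq_le h1 h2.
have es : (\sum_(u in I) deg g u = num_edges g)%N.
  apply/eqP; rewrite -(eqr_nat R) natr_sum; apply/eqP; rewrite -/e -/sI.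
  by case: key.
clear hZ hF hIv hs1 hse het htm K0 d0 m0 X0 em s0' key hd d1 dD cIR cJR sI n kk e d D.
have EM := E3 ig iI es.
have iJ : indep g (~: I).
  move=> u v; rewrite !in_setC => uI vI; apply/negP => guv.
  by move: (EM u v guv); rewrite (negbTE uI) (negbTE vI).
have sumI : (\sum_(u in I) deg g u = #|I| * min_deg g)%N.
  by rewrite (eq_bigr _ (fun u _ => reg u)) sum_nat_const.
have sumJ : (\sum_(u in ~: I) deg g u = #|~: I| * min_deg g)%N.
  by rewrite (eq_bigr _ (fun u _ => reg u)) sum_nat_const.
have dpos : (0 < min_deg g)%N by apply: leq_trans k1 dk.
have cJ : #|~: I| = k.+2.
  have h1 := E1 ig iJ; have h2 := E2 sg iI.
  rewrite sumJ -es sumI cI in h1; rewrite sumJ -es sumI cI in h2.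
  rewrite leq_pmul2r // in h1; rewrite leq_pmul2r // in h2.
  by apply/eqP; rewrite eqn_leq h1 h2.
have nT : #|T| = (k.+2 + k.+2)%N by rewrite -(cardsC I) cI cJ.
have k3 : (3 <= k)%N by move: n9; rewrite nT; clear_all; lia.
have alt : forall u v, g u v -> (u \in I) != (v \in I).
  move=> u v guv; case uI: (u \in I); case vI: (v \in I) => //=.
    by move: (iI u v uI vI); rewrite guv.
  by move: (EM u v guv); rewrite uI vI.
case: (boolP [forall v, (v \in x0 :: s1) || (v == h)]) => [/forallP allv | /forallPn [z]].
  have := alt_count alt (leqnn _) ss x0I'.
  rewrite !count_card //.
  have e1 : [set v | (v \in x0 :: s1) && [pred v | v \notin I] v] = ~: I.
    apply/setP => v; rewrite in_set in_setC /=.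
    case vI: (v \in I); rewrite /= ?andbF ?andbT //.
    have := allv v; case: (v \in x0 :: s1) => //= /eqP vh.
    by move: vI; rewrite vh hI'.
  have e2 : (#|[set v | (v \in x0 :: s1) && [pred v | v \in I] v]| <= #|I :\ h|)%N.
    apply: subset_leq_card; apply/subsetP => v; rewrite in_set in_setD1 /= => /andP [vs vI].
    rewrite vI andbT; apply/eqP => vh; move: hs; by rewrite -vh vs.
  have e3 : #|I :\ h| = k.+1 by have := cardsD1 h I; rewrite hI' cI; clear_all; lia.
  rewrite e1 cJ; move: e2; rewrite e3 => h1 h2; have := leq_trans h2 h1; by rewrite ltnn.
rewrite negb_or => /andP [zs zh].
have [Iz [zIz x0Iz IzS cIz iIz]] := lemB sg ig hk us ss ls zs.
have zI : z \notin I.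
  apply/negP => /(subsetP IIh) /(subsetP IhS); rewrite in_setU1 in_set (negbTE zh).
  by rewrite (negbTE zs).
set Nz := [set v | g z v].
have NzI : Nz \subset I.
  apply/subsetP => v; rewrite inE => gzv; move: (EM z v gzv).
  by rewrite (negbTE zI).
have cNz : #|Nz| = deg g z by [].
have ca : (#|Iz :&: I| <= 2)%N.
  have : Iz :&: I \subset I :\: Nz.
    apply/subsetP => v; rewrite !inE => /andP [vIz vI].
    by apply/andP; split; [apply: iIz | done].
  move/subset_leq_card; rewrite cardsD (setIidPr NzI) cNz cI.
  have := degk z; clear_all; lia.
set Nx := [set v | g x0 v].
have NxJ : Nx \subset ~: I.
  apply/subsetP => v; rewrite !inE => gxv; apply/negP => vI.
  by move: (iI x0 v x0I' vI); rewrite gxv.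
have cb : (#|Iz :&: ~: I| <= 2)%N.
  have : Iz :&: ~: I \subset ~: I :\: Nx.
    apply/subsetP => v; rewrite !inE => /andP [vIz vI].
    by apply/andP; split; [apply: iIz | done].
  move/subset_leq_card; rewrite cardsD (setIidPr NxJ) cJ.
  have := degk x0; rewrite /deg -/Nx; clear_all; lia.
exfalso; have := cardsID I Iz; rewrite setDE; move: ca cb cIz k3; clear_all; lia.
Qed.
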